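(* Let $r\ge 2$ and consider the $\mathfrak{q}(2)$-crystal $\mathbf{B}^{\otimes r}$. Then the $\mathfrak{q}(2)$-connected component $C(1^r)$ of $1^r=1\otimes\cdots\otimes 1$ decomposes, as $\mathfrak{gl}_2$-crystals, as $$C(1^r)=C_{\mathfrak{gl}_2}(1^r)\sqcup C_{\mathfrak{gl}_2}(1^{r-1}2)\cong C_{\mathfrak{gl}_2}(1^{r-1})\otimes \mathbf{B}_{\mathfrak{gl}_2},$$ where $C_{\mathfrak{gl}_2}(1^{r-1})$ is the $\mathfrak{gl}_2$-connected component of $1^{r-1}$ in $\mathbf{B}^{\otimes (r-1)}$, $\mathbf B_{\mathfrak{gl}_2}$ is $\mathbf B$ regarded as a $\mathfrak{gl}_2$-crystal, and $\otimes$ on the right is the tensor product of $\mathfrak{gl}_2$-crystals.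
   Context: Let $P=\mathbb Z e_1\oplus\mathbb Z e_2$, $\alpha_1=e_1-e_2$, and $(k_1,k_2)$ the dual basis of $P^*$ with pairing $\langle\,,\rangle$. A $\mathfrak{gl}_2$-crystal is a set $B$ with maps $\tilde e,\tilde f:B\to B\sqcup\{0\}$, $\varphi,\varepsilon:B\to\mathbb Z\sqcup\{-\infty\}$, $\mathrm{wt}:B\to P$ such that: $\mathrm{wt}(\tilde e b)=\mathrm{wt}(b)+\alpha_1$ if $\tilde eb\ne0$; $\mathrm{wt}(\tilde f b)=\mathrm{wt}(b)-\alpha_1$ if $\tilde fb\neq 0$; $\varphi(b)=\varepsilon(b)+\langle k_1-k_2,\mathrm{wt}(b)\rangle$; $\tilde f b=b'$ iff $b=\tilde e b'$; if $\tilde e b\ne 0$ then $\varepsilon(\tilde eb)=\varepsilon(b)-1$, $\varphi(\tilde e b)=\varphi(b)+1$; if $\tilde fb\ne0$ then $\varepsilon(\tilde fb)=\varepsilon(b)+1$, $\varphi(\tilde fb)=\varphi(b)-1$; if $\varphi(b)=-\infty$ then $\tilde eb=\tilde fb=0$. A $\mathfrak q(2)$-crystal is a $\mathfrak{gl}_2$-crystal with extra maps $\tilde e_{\bar1},\tilde f_{\bar1}:B\to B\sqcup\{0\}$ such that $\mathrm{wt}(B)\subset \mathbb Z_{\ge0}e_1\oplus\mathbb Z_{\ge0}e_2$, $\mathrm{wt}(\tilde e_{\bar1}b)=\mathrm{wt}(b)+\alpha_1$, $\mathrm{wt}(\tilde f_{\bar1}b)=\mathrm{wt}(b)-\alpha_1$,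 and $\tilde f_{\bar1}b=b'$ iff $b=\tilde e_{\bar1}b'$. The tensor product $B_1\otimes B_2$ of $\mathfrak q(2)$-crystals is the set $B_1\times B_2$ with $\mathrm{wt}(b_1\otimes b_2)=\mathrm{wt}(b_1)+\mathrm{wt}(b_2)$, $\varepsilon(b_1\otimes b_2)=\max\{\varepsilon(b_1)-\varphi(b_1)+\varepsilon(b_2),\varepsilon(b_1)\}$, $\varphi(b_1\otimes b_2)=\max\{\varphi(b_1)-\varepsilon(b_2)+\varphi(b_2),\varphi(b_2)\}$, $\tilde e(b_1\otimes b_2)=\tilde eb_1\otimes b_2$ if $\varphi(b_1)\ge\varepsilon(b_2)$ and $=b_1\otimes\tilde e b_2$ otherwise; $\tilde f(b_1\otimes b_2)=\tilde fb_1\otimes b_2$ if $\varphi(b_1)>\varepsilon(b_2)$ and $=b_1\otimes \tilde fb_2$ otherwise; $\tilde e_{\bar1}(b_1\otimes b_2)=\tilde e_{\bar1}b_1\otimes b_2$ and $\tilde f_{\bar1}(b_1\otimes b_2)=\tilde f_{\bar1}b_1\otimes b_2$ if $\langle k_1,\mathrm{wt}(b_2)\rangle=\langle k_2,\mathrm{wt}(b_2)\rangle=0$, and otherwise they act on $b_2$ (with $x\otimes 0=0\otimes x=0$). The tensor product of $\mathfrak{gl}_2$-crystals is given by the same formulas for $\mathrm{wt},\varepsilon,\varphi,\tilde e,\tilde f$. Let $\mathbf B=\{1,2\}$ with $\mathrm{wt}(1)=e_1$, $\mathrm{wt}(2)=e_2$, $\tilde f(1)=2$, $\tilde e(2)=1$,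 $\tilde e(1)=\tilde f(2)=0$, $\varepsilon(1)=0,\varphi(1)=1,\varepsilon(2)=1,\varphi(2)=0$, $\tilde f_{\bar1}(1)=2$, $\tilde e_{\bar1}(2)=1$, $\tilde e_{\bar 1}(1)=\tilde f_{\bar1}(2)=0$. Elements $a_1\otimes\cdots\otimes a_r$ of $\mathbf B^{\otimes r}$ are written as words $a_1\cdots a_r$; $1^r$ denotes $r$ letters $1$, and $1^{r-1}2$ is the word with $r-1$ ones followed by a $2$. For $b$ in a $\mathfrak q(2)$-crystal, $C(b)$ is the connected component of $b$ in the graph with edges $b\to\tilde f b$ and $b\to\tilde f_{\bar1}b$; $C_{\mathfrak{gl}_2}(b)$ is the connected component using only edges $b\to \tilde fb$. *)

(* Defs.v *)
From HB Require Import structures.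
From mathcomp Require Import all_boot all_order all_algebra.
From Stdlib Require Import Relations.
Set Implicit Arguments. Unset Strict Implicit. Unset Printing Implicit Defensive.
Import Order.TTheory GRing.Theory Num.Theory.
Local Open Scope ring_scope.

(* Letters of B = {1,2}: [false] encodes the letter 1, [true] the letter 2.
   Weights in P = Z e1 (+) Z e2 are pairs (coefficient of e1, coefficient of e2). *)
Definition weight := (int * int)%type.
Definition addw (x y : weight) : weight := (x.1 + y.1, x.2 + y.2).

Definition wtB (a : bool) : weight := if a then (0, 1) else (1, 0).
Definition epsB (a : bool) : int := if a then 1 else 0.
Definition phiB (a : bool) : int := if a then 0 else 1.
Definition eB (a : bool) : option bool := if a then Some false else None.
Definition fB (a : bool) : option bool := if a then None else Some true.
Definition ebarB (a : bool) : option bool := if a then Some false else None.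
Definition fbarB (a : bool) : option bool := if a then None else Some true.

Definition tens_eps (e1 p1 e2 : int) : int := Num.max (e1 - p1 + e2) e1.
Definition tens_phi (p1 e2 p2 : int) : int := Num.max (p1 - e2 + p2) p2.

(* The crystal B^{(x) r}: a word a_1 ... a_r is a_1 (x) (a_2 ... a_r). *)
Fixpoint wtW (w : seq bool) : weight :=
  match w with
  | [::] => (0, 0)
  | a :: w' => addw (wtB a) (wtW w')
  end.

Fixpoint epsW (w : seq bool) : int :=
  match w with
  | [::] => 0
  | [:: a] => epsB a
  | a :: w' => tens_eps (epsB a) (phiB a) (epsW w')
  end.

Fixpoint phiW (w : seq bool) : int :=
  match w with
  | [::] => 0
  | [:: a] => phiB a
  | a :: w' => tens_phi (phiB a) (epsW w') (phiW w')
  end.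

Fixpoint eW (w : seq bool) : option (seq bool) :=
  match w with
  | [::] => None
  | [:: a] => omap (fun b => [:: b]) (eB a)
  | a :: w' => if epsW w' <= phiB a then omap (fun b => b :: w') (eB a)
               else omap (cons a) (eW w')
  end.

Fixpoint fW (w : seq bool) : option (seq bool) :=
  match w with
  | [::] => None
  | [:: a] => omap (fun b => [:: b]) (fB a)
  | a :: w' => if epsW w' < phiB a then omap (fun b => b :: w') (fB a)
               else omap (cons a) (fW w')
  end.

Fixpoint ebarW (w : seq bool) : option (seq bool) :=
  match w with
  | [::] => None
  | [:: a] => omap (fun b => [:: b]) (ebarB a)
  | a :: w' => if wtW w' == (0, 0) then omap (fun b => b :: w') (ebarB a)
               else omap (cons a) (ebarW w')
  end.

Fixpoint fbarW (w : seq bool) : option (seq bool) :=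
  match w with
  | [::] => None
  | [:: a] => omap (fun b => [:: b]) (fbarB a)
  | a :: w' => if wtW w' == (0, 0) then omap (fun b => b :: w') (fbarB a)
               else omap (cons a) (fbarW w')
  end.

Definition gl2_edge (x y : seq bool) : Prop := fW x = Some y.
Definition q2_edge (x y : seq bool) : Prop := fW x = Some y \/ fbarW x = Some y.

Definition Cgl2 (b w : seq bool) : Prop := clos_refl_sym_trans _ gl2_edge b w.
Definition Cq2 (b w : seq bool) : Prop := clos_refl_sym_trans _ q2_edge b w.

(* gl_2-crystal tensor product B^{(x)(r-1)} (x) B_gl2 on pairs (u, a) = u (x) a. *)
Definition wtT (p : seq bool * bool) : weight := addw (wtW p.1) (wtB p.2).
Definition epsT (p : seq bool * bool) : int := tens_eps (epsW p.1) (phiW p.1) (epsB p.2).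
Definition phiT (p : seq bool * bool) : int := tens_phi (phiW p.1) (epsB p.2) (phiB p.2).
Definition eT (p : seq bool * bool) : option (seq bool * bool) :=
  if epsB p.2 <= phiW p.1 then omap (fun u => (u, p.2)) (eW p.1)
  else omap (fun b => (p.1, b)) (eB p.2).
Definition fT (p : seq bool * bool) : option (seq bool * bool) :=
  if epsB p.2 < phiW p.1 then omap (fun u => (u, p.2)) (fW p.1)
  else omap (fun b => (p.1, b)) (fB p.2).

Definition gl2_iso (D : seq bool * bool -> Prop) (S : seq bool -> Prop)
    (psi : seq bool * bool -> seq bool) : Prop :=
  [/\ (forall p q, D p -> D q -> psi p = psi q -> p = q),
      (forall w, S w <-> exists2 p, D p & psi p = w),
      (forall p, D p -> wtW (psi p) = wtT p /\ epsW (psi p) = epsT p /\ phiW (psi p) = phiT p)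
    & (forall p, D p -> eW (psi p) = omap psi (eT p) /\ fW (psi p) = omap psi (fT p))].

(* Main.v *)
Require Import Defs.
From mathcomp Require Import all_boot all_order all_algebra zify.
From Stdlib Require Import Relations.
Import Order.TTheory GRing.Theory Num.Theory.
Set Implicit Arguments. Unset Strict Implicit. Unset Printing Implicit Defensive.
Open Scope ring_scope.

Lemma epsW_cons a w : epsW (a :: w) = tens_eps (epsB a) (phiB a) (epsW w).
Proof. by case: w => [|b w] //; case: a. Qed.
Lemma phiW_cons a w : phiW (a :: w) = tens_phi (phiB a) (epsW w) (phiW w).
Proof. by case: w => [|b w] //; case: a. Qed.
Lemma fW_cons a w : fW (a :: w) = if epsW w < phiB a then omap (fun b => b :: w) (fB a)
               else omap (cons a) (fW w).
Proof. by case: w => [|b w] //; case: a. Qed.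
Lemma eW_cons a w : eW (a :: w) = if epsW w <= phiB a then omap (fun b => b :: w) (eB a)
               else omap (cons a) (eW w).
Proof. by case: w => [|b w] //; case: a. Qed.

Lemma epsW_ge0 w : 0 <= epsW w.
Proof. elim: w => [|a w IH] //; rewrite epsW_cons /tens_eps; case: a => /=; lia. Qed.
Lemma phiW_ge0 w : 0 <= phiW w.
Proof. elim: w => [|a w IH] //; rewrite phiW_cons /tens_phi; case: a => /=; lia. Qed.

Lemma f_spec w y : fW w = Some y ->
  [/\ eW y = Some w, epsW y = epsW w + 1 & phiW y = phiW w - 1].
Proof.
elim: w y => [|a w IH] y //.
rewrite fW_cons; case: ifP => h.
  case: a h => // h [<-]; have e0 := epsW_ge0 w; rewrite /= in h.
  rewrite eW_cons !epsW_cons !phiW_cons /tens_eps /tens_phi /=.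
  case: ifP => H; last by exfalso; move/negbT: H; lia.
  split=> //; lia.
case E: (fW w) => [y'|] // [<-].
have [h1 h2 h3] := IH _ E.
rewrite eW_cons epsW_cons phiW_cons epsW_cons phiW_cons h1 h2 h3 /tens_eps /tens_phi.
have -> : (epsW w + 1 <= phiB a) = false by apply/negbTE; lia.
split=> //; lia.
Qed.

Lemma crst_closed (R : relation (seq bool)) (P : seq bool -> Prop) :
  (forall x y, R x y -> P x -> P y) -> (forall x y, R x y -> P y -> P x) ->
  forall b w, clos_refl_sym_trans _ R b w -> P b -> P w.
Proof.
move=> H1 H2 b w Hc.
suff: P b <-> P w by case.
elim: Hc => [x y Rxy|x|x y _ [? ?]|x y z _ [? ?] _ [? ?]]; try tauto.
split; [exact: H1|exact: H2].
Qed.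

Lemma gl2_closed (P : seq bool -> Prop) :
  (forall x y, P x -> fW x = Some y -> P y) ->
  (forall x y, P y -> eW y = Some x -> P x) ->
  forall b w, Cgl2 b w -> P b -> P w.
Proof.
move=> H1 H2; apply: crst_closed => x y; rewrite /gl2_edge => E.
  by move=> Px; apply: H1 Px E.
by move=> Py; case: (f_spec E) => He _ _; apply: (H2 x y) Py He.
Qed.

Lemma wt_sum w : (wtW w).1 + (wtW w).2 = (size w)%:Z.
Proof. elim: w => [|a w IH] //=; rewrite /addw /=; case: a => /=; lia. Qed.

Lemma wtW_rcons u a : wtW (rcons u a) = addw (wtW u) (wtB a).
Proof.
elim: u => [|b u IH] /=; first by rewrite /addw /= !add0r !addr0; case: (wtB a).
by rewrite IH /addw /= !addrA.
Qed.

Lemma fbarW_rcons u a : fbarW (rcons u a) = if a then None else Some (rcons u true).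
Proof.
elim: u => [|b u IH]; first by case: a.
rewrite rcons_cons /=.
case E: (rcons u a) => [|c t].
  by move/(congr1 size): E; rewrite size_rcons.
have -> : (wtW (c :: t) == (0, 0)) = false.
  apply/negbTE/eqP => H; move: (wt_sum (c :: t)); rewrite H /=; lia.
by rewrite -E IH; case: (a).
Qed.

Lemma ebarW_rcons u a : ebarW (rcons u a) = if a then Some (rcons u false) else None.
Proof.
elim: u => [|b u IH]; first by case: a.
rewrite rcons_cons /=.
case E: (rcons u a) => [|c t].
  by move/(congr1 size): E; rewrite size_rcons.
have -> : (wtW (c :: t) == (0, 0)) = false.
  apply/negbTE/eqP => H; move: (wt_sum (c :: t)); rewrite H /=; lia.
by rewrite -E IH; case: (a).
Qed.

Lemma fbar_spec w y : fbarW w = Some y -> exists u, w = rcons u false /\ y = rcons u true.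
Proof.
case/lastP: w => [|u a] //; rewrite fbarW_rcons; case: a => // [[<-]].
by exists u.
Qed.

Definition W k m : seq bool := nseq k true ++ nseq m false.
Definition V k m : seq bool := W k m ++ [:: true].

Arguments W : simpl never.
Arguments V : simpl never.

Lemma W_S k m : W k.+1 m = true :: W k m. Proof. by []. Qed.
Lemma W_0S m : W 0 m.+1 = false :: W 0 m. Proof. by []. Qed.
Lemma V_S k m : V k.+1 m = true :: V k m. Proof. by []. Qed.
Lemma V_0S m : V 0 m.+1 = false :: V 0 m. Proof. by []. Qed.
Lemma V_rcons k m : V k m = rcons (W k m) true. Proof. by rewrite /V cats1. Qed.
Lemma W_rconsF k m : W k m.+1 = rcons (W k m) false.
Proof. by rewrite /W -cats1 -catA; congr (_ ++ _); elim: m => //= m ->. Qed.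
Lemma W_rconsT k : W k.+1 0 = rcons (W k 0) true.
Proof. by rewrite /W !cats0; elim: k => //= k ->. Qed.
Lemma V0 k : V k 0 = W k.+1 0. Proof. by rewrite V_rcons W_rconsT. Qed.

Lemma epsphi_W k m : epsW (W k m) = k%:Z /\ phiW (W k m) = m%:Z.
Proof.
elim: k => [|k [IH1 IH2]].
  elim: m => [|m [IH1 IH2]] //.
  rewrite W_0S epsW_cons phiW_cons IH1 IH2 /tens_eps /tens_phi /=; split; lia.
rewrite W_S epsW_cons phiW_cons IH1 IH2 /tens_eps /tens_phi /=; split; lia.
Qed.
Lemma epsW_W k m : epsW (W k m) = k%:Z. Proof. by case: (epsphi_W k m). Qed.
Lemma phiW_W k m : phiW (W k m) = m%:Z. Proof. by case: (epsphi_W k m). Qed.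

Lemma epsphi_V k m : epsW (V k m.+1) = k%:Z /\ phiW (V k m.+1) = m%:Z.
Proof.
elim: k => [|k [IH1 IH2]].
  elim: m => [|m [IH1 IH2]] //.
  rewrite V_0S epsW_cons phiW_cons IH1 IH2 /tens_eps /tens_phi /=; split; lia.
rewrite V_S epsW_cons phiW_cons IH1 IH2 /tens_eps /tens_phi /=; split; lia.
Qed.
Lemma epsW_V k m : epsW (V k m.+1) = k%:Z. Proof. by case: (epsphi_V k m). Qed.
Lemma phiW_V k m : phiW (V k m.+1) = m%:Z. Proof. by case: (epsphi_V k m). Qed.

Lemma fW_W k m : fW (W k m) = if m is m'.+1 then Some (W k.+1 m') else None.
Proof.
elim: k => [|k IH].
  case: m => [|m] //; rewrite W_0S fW_cons epsW_W /=; by [].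
rewrite W_S fW_cons epsW_W IH /=; case: m {IH} => //.
Qed.

Lemma eW_W k m : eW (W k m) = if k is k'.+1 then Some (W k' m.+1) else None.
Proof.
elim: k => [|k IH].
  case: m => [|m] //; rewrite W_0S eW_cons epsW_W /=; by [].
rewrite W_S eW_cons epsW_W IH /=; case: k {IH} => //.
Qed.

Lemma fW_V k m : fW (V k m.+1) = if m is m'.+1 then Some (V k.+1 m) else None.
Proof.
elim: k => [|k IH].
  case: m => [|m] //; rewrite V_0S fW_cons epsW_V /=; by [].
rewrite V_S fW_cons epsW_V IH /=; case: m {IH} => //.
Qed.

Lemma eW_V k m : eW (V k m.+1) = if k is k'.+1 then Some (V k' m.+2) else None.
Proof.
elim: k => [|k IH].
  case: m => [|m] //; rewrite V_0S eW_cons epsW_V /=; by [].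
rewrite V_S eW_cons epsW_V IH /=; case: k {IH} => //.
Qed.

Definition A n w := exists k m, (k + m)%N = n /\ w = W k m.
Definition B r w := exists k m, (k + m + 2)%N = r /\ w = V k m.+1.

Lemma reachW k m : Cgl2 (W 0 (k + m)) (W k m).
Proof.
elim: k m => [|k IH] m; first exact: rst_refl.
have := IH m.+1; rewrite addnS addSn /Cgl2 => H.
apply: (rst_trans _ _ _ _ _ H).
by apply: rst_step; rewrite /gl2_edge fW_W.
Qed.

Lemma reachV k m : Cgl2 (V 0 (k + m).+1) (V k m.+1).
Proof.
elim: k m => [|k IH] m; first exact: rst_refl.
have := IH m.+1; rewrite addnS addSn /Cgl2 => H.
apply: (rst_trans _ _ _ _ _ H).
by apply: rst_step; rewrite /gl2_edge fW_V.
Qed.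

Lemma A_char n w : Cgl2 (nseq n false) w <-> A n w.
Proof.
split.
  move=> H; apply: (gl2_closed _ _ H); last by exists 0%N, n.
    move=> x y [k [m [<- ->]]]; rewrite fW_W; case: m => // m [<-].
    by exists k.+1, m; rewrite addSnnS.
  move=> x y [k [m [<- ->]]]; rewrite eW_W; case: k => // k [<-].
  by exists k, m.+1; rewrite addSnnS.
by move=> [k [m [<- ->]]]; apply: reachW.
Qed.

Lemma B_char r w : (2 <= r)%N ->
  Cgl2 (rcons (nseq r.-1 false) true) w <-> B r w.
Proof.
move=> hr; have -> : rcons (nseq r.-1 false) true = V 0 (r - 2).+1.
  have -> : r.-1 = (r-2).+1 by lia.
  by rewrite V_rcons.
split.
  move=> H; apply: (gl2_closed _ _ H); last by exists 0%N, (r - 2)%N; split=> //; lia.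
    move=> x y [k [m [<- ->]]]; rewrite fW_V; case: m => // m [<-].
    by exists k.+1, m; split=> //; lia.
  move=> x y [k [m [<- ->]]]; rewrite eW_V; case: k => // k [<-].
  by exists k, m.+1; split=> //; lia.
move=> [k [m [<- ->]]].
have -> : (k + m + 2 - 2 = k + m)%N by lia.
exact: reachV.
Qed.

Lemma q2_closed (P : seq bool -> Prop) :
  (forall x y, P x -> fW x = Some y -> P y) ->
  (forall x y, P y -> eW y = Some x -> P x) ->
  (forall u, P (rcons u false) -> P (rcons u true)) ->
  (forall u, P (rcons u true) -> P (rcons u false)) ->
  forall b w, Cq2 b w -> P b -> P w.
Proof.
move=> H1 H2 H3 H4; apply: crst_closed.
  move=> x y [E|E].
    by move=> Px; apply: H1 Px E.
  by have [u [-> ->]] := fbar_spec E; apply: H3.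
move=> x y [E|E].
  by move=> Py; case: (f_spec E) => He _ _; apply: (H2 x y) Py He.
by have [u [-> ->]] := fbar_spec E; apply: H4.
Qed.

Lemma Cgl2_Cq2 b w : Cgl2 b w -> Cq2 b w.
Proof.
elim=> [x y E|x|x y _ IH|x y z _ IH1 _ IH2].
- by apply: rst_step; left.
- exact: rst_refl.
- exact: rst_sym.
- exact: (rst_trans _ _ _ _ _ IH1 IH2).
Qed.

Lemma A_fwd n x y : A n x -> fW x = Some y -> A n y.
Proof.
move=> [k [m [<- ->]]]; rewrite fW_W; case: m => // m [<-].
by exists k.+1, m; rewrite addSnnS.
Qed.
Lemma A_bwd n x y : A n y -> eW y = Some x -> A n x.
Proof.
move=> [k [m [<- ->]]]; rewrite eW_W; case: k => // k [<-].
by exists k, m.+1; rewrite addSnnS.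
Qed.
Lemma B_fwd r x y : B r x -> fW x = Some y -> B r y.
Proof.
move=> [k [m [<- ->]]]; rewrite fW_V; case: m => // m [<-].
by exists k.+1, m; split=> //; lia.
Qed.
Lemma B_bwd r x y : B r y -> eW y = Some x -> B r x.
Proof.
move=> [k [m [<- ->]]]; rewrite eW_V; case: k => // k [<-].
by exists k, m.+1; split=> //; lia.
Qed.

Lemma W_rcons_cases k m u a : rcons u a = W k m ->
  (exists m', m = m'.+1 /\ a = false /\ u = W k m') \/
  (exists k', k = k'.+1 /\ m = 0%N /\ a = true /\ u = W k' 0).
Proof.
case: m => [|m].
  case: k => [|k].
    by move/(congr1 size); rewrite size_rcons.
  by rewrite W_rconsT; case/rcons_inj => -> ->; right; exists k.
by rewrite W_rconsF; case/rcons_inj => -> ->; left; exists m.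
Qed.

Lemma Cq2_char r w : (2 <= r)%N -> Cq2 (nseq r false) w <-> A r w \/ B r w.
Proof.
move=> hr; split.
  move=> H; apply: (@q2_closed (fun w => A r w \/ B r w) _ _ _ _ _ _ H); last by left; exists 0%N, r.
  - move=> x y [Hx|Hx] E; [left; exact: A_fwd Hx E|right; exact: B_fwd Hx E].
  - move=> x y [Hy|Hy] E; [left; exact: A_bwd Hy E|right; exact: B_bwd Hy E].
  - move=> u [[k [m [hk /W_rcons_cases]]]|[k [m [hk]]]].
      case=> [[m' [Em [_ ->]]]|[k' [_ [_ [//]]]]]; subst m.
      rewrite -V_rcons; case: m' hk => [|m'] hk.
        by left; rewrite V0; exists k.+1, 0%N; split=> //; lia.
      by right; exists k, m'; split=> //; lia.
    by rewrite V_rcons; case/rcons_inj.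
  - move=> u [[k [m [hk /W_rcons_cases]]]|[k [m [hk]]]].
      case=> [[m' [_ [//]]]|[k' [Ek [Em [_ ->]]]]]; subst k m.
      by left; rewrite -W_rconsF; exists k', 1%N; split=> //; lia.
    rewrite V_rcons; case/rcons_inj => ->.
    by left; rewrite -W_rconsF; exists k, m.+2; split=> //; lia.
case=> [/(A_char r w)|/(B_char w hr)]; first exact: Cgl2_Cq2.
move/Cgl2_Cq2 => H.
apply: (rst_trans _ _ _ _ _ _ H); apply: rst_step; right.
case: r hr H => // r' _ H.
by change (nseq r'.+1 false) with (W 0 r'.+1); rewrite W_rconsF fbarW_rcons.
Qed.

Theorem proposition3p4 (r : nat) (hr : (2 <= r)%N) :
  [/\ (forall w, Cq2 (nseq r false) w <->
                 Cgl2 (nseq r false) w \/ Cgl2 (rcons (nseq r.-1 false) true) w),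
      (forall w, ~ (Cgl2 (nseq r false) w /\ Cgl2 (rcons (nseq r.-1 false) true) w))
    & exists psi, gl2_iso (fun p => Cgl2 (nseq r.-1 false) p.1) (Cq2 (nseq r false)) psi].
Proof.
split.
- move=> w; split.
    move/(iffLR (@Cq2_char r w hr)) => [/(iffRL (A_char r w))|/(iffRL (@B_char r w hr))] H; [left|right]; exact: H.
  by case=> [/(iffLR (A_char r w))|/(iffLR (@B_char r w hr))] H; apply/(iffRL (@Cq2_char r w hr)); [left|right].
- move=> w [/(iffLR (A_char r w)) [k [m [_ ->]]] /(iffLR (@B_char r _ hr)) [k' [m' [_]]]].
  rewrite V_rcons => /esym/W_rcons_cases [[? [_ [//]]]|[k'' [_ [_ [_ E]]]]].
  have : false \in W k' m'.+1 by rewrite /W mem_cat mem_nseq /= orbT.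
  by rewrite E /W cats0 mem_nseq andbF.
exists (fun p => rcons p.1 p.2); split.
- by move=> [u a] [v b] _ _ /= /rcons_inj [-> ->].
- move=> w; split.
    move/(@Cq2_char r w hr) => [[k [m [hk ->]]]|[k [m [hk ->]]]].
      case: m hk => [|m] hk.
        case: k hk => [|k] hk; first lia.
        exists (W k 0, true); last by rewrite /= W_rconsT.
        by apply/(A_char r.-1 _); exists k, 0%N; split=> //; lia.
      exists (W k m, false); last by rewrite /= W_rconsF.
      by apply/(A_char r.-1 _); exists k, m; split=> //; lia.
    exists (W k m.+1, true); last by rewrite /= V_rcons.
    by apply/(A_char r.-1 _); exists k, m.+1; split=> //; lia.
  move=> [[u a] /= /(A_char r.-1 u) [k [m [hk ->]]] <-]; apply/(@Cq2_char r _ hr).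
  case: a.
    case: m hk => [|m] hk.
      by left; rewrite -W_rconsT; exists k.+1, 0%N; split=> //; lia.
    by right; rewrite -V_rcons; exists k, m; split=> //; lia.
  by left; rewrite -W_rconsF; exists k, m.+1; split=> //; lia.
- move=> [u a] /= /(A_char r.-1 u) [k [m [hk ->]]].
  rewrite wtW_rcons; split=> //.
  rewrite /epsT /phiT /= epsW_W phiW_W /tens_eps /tens_phi.
  case: a; [case: m {hk} => [|m]|].
  + by rewrite -W_rconsT epsW_W phiW_W /=; split; lia.
  + by rewrite -V_rcons epsW_V phiW_V /=; split; lia.
  + by rewrite -W_rconsF epsW_W phiW_W /=; split; lia.
- move=> [u a] /= /(A_char r.-1 u) [k [m [hk ->]]].
  rewrite /eT /fT /= phiW_W; clear hk.
  case: a; [case: m => [|m]|].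
  + rewrite -W_rconsT eW_W fW_W /=.
    by rewrite W_rconsF.
  + rewrite -V_rcons eW_V fW_V eW_W fW_W /=.
    by case: k => [|k]; case: m => [|m] /=; rewrite ?V_rcons.
  + rewrite -W_rconsF eW_W fW_W /=.
    case: m => [|m]; rewrite eW_W ?fW_W;
    case: k => [|k] /=; rewrite ?W_rconsF ?W_rconsT //.
by split=> //; rewrite -W_rconsT -W_rconsT.
Qed.
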